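(* Let $\mathcal{P}$ be a locally geometric poset of rank $r$ and write $\chi_{\mathcal{P}}(t)=c_rt^r+c_{r-1}t^{r-1}+\cdots+c_0$. Then $(-1)^{r-i}c_i>0$ for all $0\le i\le r$.
   Context: All posets are finite, have a unique minimal element $\hat0$ and are ranked (all maximal chains with top $x$ have the same length $\operatorname{rk}(x)$); $\operatorname{rk}(\mathcal{P})=\max_x\operatorname{rk}(x)$. $\chi_{\mathcal{P}}(t)=\sum_x\mu(\hat0,x)t^{\operatorname{rk}(\mathcal{P})-\operatorname{rk}(x)}$, $\mu$ the Möbius function. For $x,y$, $x\vee y$ is the set of minimal upper bounds. A lattice is geometric if for all $x,y$: $y$ covers $x$ iff there is an atom (rank-1 element) $a\not\le x$ with $y=x\vee a$. $\mathcal{P}$ is locally geometric if $\mathcal{P}_{\le x}$ is a geometric lattice for every $x\in\mathcal{P}$. *)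

(* Defs.v *)
From HB Require Import structures.
From mathcomp Require Import all_boot all_order all_algebra.
Set Implicit Arguments. Unset Strict Implicit. Unset Printing Implicit Defensive.
Import Order.Theory GRing.Theory.

(* Finite posets are finPOrderType's; the bottom element b is passed explicitly. *)
Section PosetDefs.
Context {d : Order.disp_t} {T : finPOrderType d}.
Local Open Scope order_scope.

Definition covers (x y : T) : bool :=
  (x < y) && [forall z : T, ~~ ((x < z) && (z < y))].

(* maximal chain b = x0 < x1 < ... < xk = x, listed as b :: s (length k = size s) *)
Definition sat_chain (b : T) (s : seq T) (x : T) : bool :=
  path covers b s && (last b s == x).

Definition ranked (b : T) : Prop :=
  forall x s1 s2, sat_chain b s1 x -> sat_chain b s2 x -> size s1 = size s2.

(* rank of x: the length of a maximal chain from b to x (all chains have length < #|T|) *)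
Definition rk (b x : T) : nat :=
  \max_(i < #|T|) (if [exists s : i.-tuple T, sat_chain b s x] then (i : nat) else 0%N).

Definition rankP (b : T) : nat := \max_(x : T) rk b x.

(* Moebius function, by the usual recursion mu(x,x)=1, mu(x,y) = - sum_{x<=z<y} mu(x,z);
   the fuel #|T| exceeds the length of any strict chain. *)
Fixpoint mobius_aux (n : nat) (x y : T) : int :=
  match n with
  | 0 => (x == y)%:Z
  | n'.+1 =>
      if x == y then 1%R
      else if x <= y then (- \sum_(z : T | ((x <= z) && (z < y))%O) mobius_aux n' x z)%R
      else 0%R
  end.

Definition mobius (x y : T) : int := mobius_aux #|T| x y.

Definition charpoly (b : T) : {poly int} :=
  (\sum_(x : T) (mobius b x)%:P * 'X^(rankP b - rk b x))%R.

Definition is_atom (b a : T) : bool := covers b a.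

Definition is_join_below (x y a z : T) : Prop :=
  [/\ z <= x, y <= z, a <= z & forall w, w <= x -> y <= w -> a <= w -> z <= w].

(* z is the meet of y and a (in P_{<= x}, which is down-closed) *)
Definition is_meet_below (y a z : T) : Prop :=
  [/\ z <= y, z <= a & forall w, w <= y -> w <= a -> w <= z].

Definition lattice_below (x : T) : Prop :=
  forall y z, y <= x -> z <= x ->
    (exists j, is_join_below x y z j) /\ (exists m, is_meet_below y z m).

(* atoms of P_{<= x} are atoms of P below x; covering in P_{<= x} is covering in P *)
Definition geometric_below (b x : T) : Prop :=
  lattice_below x /\
  forall y z, y <= x -> z <= x ->
    (covers y z <-> exists a, [/\ is_atom b a, a <= x, ~~ (a <= y) & is_join_below x y a z]).

Definition locally_geometric (b : T) : Prop := forall x, geometric_below b x.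

End PosetDefs.

(* Main.v *)
Require Import Defs.
From HB Require Import structures.
From mathcomp Require Import all_boot all_order all_algebra.
From mathcomp Require Import zify.
Import Order.Theory GRing.Theory Num.Theory.

Section Aux.
Context {d : Order.disp_t} {T : finPOrderType d}.
Local Open Scope order_scope.

Definition hgt (y : T) := #|[set w : T | w < y]|.

Lemma hgt_lt (y z : T) : y < z -> (hgt y < hgt z)%N.
Proof.
move=> yz; apply: proper_card; apply/properP; split.
  by apply/subsetP => w; rewrite !inE => wy; apply: lt_trans yz.
by exists y; rewrite !inE ?yz ?ltxx.
Qed.

Lemma hgt_small (y : T) : (hgt y < #|T|)%N.
Proof.
rewrite -cardsT; apply: proper_card; rewrite properT.
by apply/eqP => /setP /(_ y); rewrite !inE ltxx.
Qed.

Lemma coatom_ex (y x : T) : y < x -> exists z, y <= z /\ covers z x.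
Proof.
move=> yx.
have P0 : (fun z => (y <= z) && (z < x)) y by rewrite /= lexx yx.
case: (@arg_maxnP _ y (fun z => (y <= z) && (z < x)) hgt P0) => z /andP[yz zx] zmax.
exists z; split => //; rewrite /covers zx /=; apply/forallP => w.
apply/negP => /andP[zw wx].
have := zmax w; rewrite (le_trans yz (ltW zw)) wx => /(_ isT).
move=> /= H; have := hgt_lt _ _ zw; lia.
Qed.

Lemma mobius_auxS (x : T) n y : (hgt y <= n)%N -> mobius_aux n x y = mobius_aux n.+1 x y.
Proof.
elim: n y => [|n IH] y Hy.
  rewrite /=; case: eqP => // nxy; case: ifP => // xy.
  exfalso; move: Hy; rewrite /hgt leqn0 => /eqP /cards0_eq /setP /(_ x).
  rewrite !inE lt_def xy andbT; case: eqP => // yx; by case: nxy.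
rewrite /=; case: eqP => // _; case: ifP => // _; congr (- _)%R.
apply: eq_bigr => z /andP[_ zy]; apply: IH.
by have := hgt_lt _ _ zy; lia.
Qed.

Lemma mobiusE (x y : T) : mobius x y = if x == y then 1%R else if x <= y then
   (- \sum_(z : T | ((x <= z) && (z < y))%O) mobius x z)%R else 0%R.
Proof.
have [n eqn] : exists n, #|T| = n.+1.
  by exists #|T|.-1; rewrite prednK //; apply/card_gt0P; exists x.
rewrite /mobius eqn /=; case: eqP => // _; case: ifP => // _; congr (- _)%R.
apply: eq_bigr => z _; rewrite mobius_auxS //; have := hgt_small z; lia.
Qed.

Lemma mobius_sum (b x : T) : (forall z, b <= z) -> x != b ->
  (\sum_(z : T | (z <= x)%O) mobius b z = 0)%R.
Proof.
move=> hb xb; rewrite (bigD1 x) ?lexx //= mobiusE eq_sym (negbTE xb) hb.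
rewrite [X in (_ + X)%R](eq_bigl (fun z => (b <= z) && (z < x))) ?addNr // => z.
by rewrite hb /= lt_def eq_sym andbC.
Qed.

End Aux.

Section Main.
Context {d : Order.disp_t} {T : finPOrderType d} (b : T).
Hypothesis hb : forall x : T, (b <= x)%O.
Hypothesis hr : ranked b.
Hypothesis hg : locally_geometric b.
Local Open Scope order_scope.

Lemma chain_size {s x} : sat_chain b s x -> (size s < #|T|)%N.
Proof.
case/andP => p _.
have u : uniq (b :: s).
  apply: (sorted_uniq lt_trans ltxx); by apply: sub_path p => u v /andP[].
have := max_card (mem (b :: s)); rewrite (card_uniqP u) /=; lia.
Qed.

Lemma chain_ex x : exists s, sat_chain b s x.
Proof.
elim: {x}(hgt x).+1 {-2}x (ltnSn (hgt x)) => // n IH x hx.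
case: (eqVneq x b) => [->|xb]; first by exists [::]; rewrite /sat_chain /= eqxx.
have bx : b < x by rewrite lt_def xb hb.
case: (coatom_ex _ _ bx) => z [_ czx].
have zx : z < x by case/andP: czx.
have := hgt_lt _ _ zx => hzx.
case: (IH z) => [|s hs]; first by lia.
exists (rcons s x); rewrite /sat_chain rcons_path last_rcons eqxx andbT.
by case/andP: hs => -> /eqP ->.
Qed.

Lemma rkE {s x} : sat_chain b s x -> rk b x = size s.
Proof.
move=> hs; apply/eqP; rewrite eqn_leq; apply/andP; split.
  apply/bigmax_leqP => i _; case: ifP => // /existsP [t ht].
  by rewrite -(size_tuple t) (hr _ _ _ ht hs).
have Hs := chain_size hs.
apply: leq_trans (leq_bigmax (Ordinal Hs)); rewrite /=.
case: ifP => // /negbT /negP []; apply/existsP; by exists (in_tuple s).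
Qed.

Lemma rk_cover {w x} : covers w x -> rk b x = (rk b w).+1.
Proof.
move=> cwx; case: (chain_ex w) => s hs.
rewrite (rkE hs) (@rkE (rcons s x)) ?size_rcons //.
rewrite /sat_chain rcons_path last_rcons eqxx andbT.
by case/andP: hs => -> /eqP ->.
Qed.

Definition jn (a y z : T) : bool := [&& z <= y, a <= y &
  [forall w, ((w <= y) && (z <= w) && (a <= w)) ==> (y <= w)]].

Lemma jn_uniq {a x z} : z <= x -> a <= x ->
  exists j, forall y, ((a <= y) && (y <= x) && jn a y z) = (y == j).
Proof.
move=> zx ax; case: (hg x) => [hl _].
case: (hl z a zx ax) => [[j [jx zj aj jmin]] _].
exists j => y; apply/idP/eqP.
  case/andP => [/andP[ay yx] /and3P[zy _ /forallP H]].
  have jy := jmin y yx zy ay.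
  have := H j; rewrite jy zj aj /= => yj.
  by apply/le_anti; rewrite yj jy.
move=> ->; rewrite /jn aj jx zj /=.
apply/forallP => w; apply/implyP => /andP[/andP[wj zw] aw].
exact: jmin w (le_trans wj jx) zw aw.
Qed.

Lemma weisner {a} : is_atom b a -> forall x, a <= x ->
  (\sum_(z : T | jn a x z) mobius b z = 0)%R.
Proof.
move=> ha x.
elim: {x}(hgt x).+1 {-2}x (ltnSn (hgt x)) => // n IH x hx ax.
have xb : x != b.
  apply/eqP => xb; move/andP: ha => [ba _].
  by have := lt_le_trans ba ax; rewrite xb ltxx.
have S := mobius_sum _ _ hb xb.
have E : (\sum_(z : T | (z <= x)%O) mobius b z =
   \sum_(y : T | ((a <= y) && (y <= x))%O) \sum_(z : T | jn a y z) mobius b z)%R.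
  transitivity (\sum_(z : T | (z <= x)%O)
      \sum_(y : T | ((a <= y) && (y <= x))%O && jn a y z) mobius b z)%R.
    apply: eq_bigr => z zx; case: (jn_uniq zx ax) => j Hj.
    by rewrite (eq_bigl (fun y => y == j)) // big_pred1_eq.
  rewrite (exchange_big_dep (fun y => (a <= y) && (y <= x))); last first.
    by move=> z y _ /andP[].
  apply: eq_bigr => y /andP[ay yx]; apply: eq_bigl => z.
  rewrite ay yx /=; apply/andP/idP => [[] //|jz]; split => //.
  by case/and3P: jz => zy _ _; apply: le_trans zy yx.
rewrite E (bigD1 x) /= ?ax ?lexx // in S.
rewrite [X in (_ + X)%R]big1 ?addr0 // in S.
move=> y /andP[/andP[ay yx] ynx]; apply: IH => //.
have yx' : y < x by rewrite lt_def eq_sym ynx yx.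
have := hgt_lt _ _ yx'; lia.
Qed.

Lemma jn_cover {a w x} : is_atom b a -> a <= x -> jn a x w -> w != x -> covers w x.
Proof.
move=> ha ax jw wnx; case/and3P: (jw) => wx _ /forallP H.
case: (hg x) => [_ hc]; apply/(hc w x wx (lexx x)).
exists a; split => //.
  apply/negP => aw; have := H w; rewrite lexx aw wx /= => xw.
  by move/negP: wnx; apply; apply/eqP/le_anti; rewrite wx xw.
split => // w' w'x ww' aw'; have := H w'; rewrite w'x ww' aw'; exact.
Qed.

Lemma mu_sign x : (0 < (-1) ^+ rk b x * mobius b x)%R.
Proof.
elim: {x}(hgt x).+1 {-2}x (ltnSn (hgt x)) => // n IH x hx.
case: (eqVneq x b) => [->|xb].
  rewrite (@rkE [::]) ?/sat_chain ?eqxx // mobiusE eqxx.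
  by rewrite expr0 mul1r.
have bx : b < x by rewrite lt_def xb hb.
case: (coatom_ex _ _ bx) => z [_ czx].
have zx : z <= x by case/andP: czx => /ltW.
case: (hg x) => [_ hc].
case: ((hc z x zx (lexx x)).1 czx) => a [ha ax naz [_ _ _ jzm]].
have W := weisner ha _ ax.
have jxx : jn a x x.
  rewrite /jn lexx ax /=; apply/forallP => w; apply/implyP.
  by case/andP => /andP[_ ->].
rewrite (bigD1 x) //= in W.
have Mx : mobius b x = (- \sum_(w : T | jn a x w && (w != x)) mobius b w)%R.
  by apply/eqP; rewrite -addr_eq0 W.
rewrite Mx mulrN -mulNr mulr_sumr.
have jz : jn a x z.
  rewrite /jn zx ax /=; apply/forallP => w; apply/implyP.
  by case/andP => /andP[wx zw] aw; apply: jzm.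
have znx : z != x by case/andP: czx; rewrite lt_def eq_sym => /andP[].
have term w : jn a x w && (w != x) ->
    (0 < - (-1) ^+ rk b x * mobius b w)%R.
  case/andP => jw wnx.
  have cwx := jn_cover ha ax jw wnx.
  rewrite (rk_cover cwx) exprS mulN1r opprK; apply: IH.
  have wx' : w < x by case/andP: cwx.
  have := hgt_lt _ _ wx'; lia.
rewrite (bigD1 z) /=; last by rewrite jz znx.
have h1 := term z; rewrite jz znx in h1; have {}h1 := h1 isT.
have h2 : (0 <= \sum_(w : T | jn a x w && (w != x) && (w != z)) - (-1) ^+ rk b x * mobius b w)%R.
  apply: sumr_ge0 => w /andP[hw _]; apply: ltW; exact: term.
by apply: (lt_le_trans h1); rewrite lerDl.
Qed.

End Main.

Theorem lemma3p4 (d : Order.disp_t) (T : finPOrderType d) (b : T) (r : nat) :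
  (forall x : T, (b <= x)%O) ->
  ranked b ->
  locally_geometric b ->
  rankP b = r ->
  forall i : nat, (i <= r)%N ->
    (0 < (-1) ^+ (r - i) * (charpoly b)`_i)%R.
Proof.
move=> hb hr hg hrk i ir.
have rkle x : (rk b x <= r)%N by rewrite -hrk; exact: (leq_bigmax x).
have [xm exm] : {x | rankP b = rk b x}.
  have c0 : (0 < #|T|)%N by apply/card_gt0P; exists b.
  exact: (bigop.eq_bigmax (fun x : T => rk b x) c0).
case: (chain_ex b hb xm) => s hs.
have ss : size s = r by rewrite -(rkE b hr hs) -exm hrk.
set t := take (r - i) s.
have ht : sat_chain b t (last b t).
  rewrite /sat_chain eqxx andbT; case/andP: hs => p _.
  by move: p; rewrite -(cat_take_drop (r - i) s) cat_path => /andP[].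
have rk0 : rk b (last b t) = (r - i)%N by rewrite (rkE b hr ht) size_takel // ss leq_subr.
rewrite /charpoly coef_sum mulr_sumr.
have term x : ((-1) ^+ (r - i) * ((mobius b x)%:P * 'X^(rankP b - rk b x))`_i =
   if rk b x == (r - i)%N then (-1) ^+ rk b x * mobius b x else 0)%R.
  rewrite coefCM coefXn hrk; case: (eqVneq (rk b x) (r - i)%N) => e.
    have -> : (i == r - rk b x)%N by apply/eqP; lia.
    by rewrite mulr1 e.
  have -> : (i == r - rk b x)%N = false by apply/negbTE/eqP; have := rkle x; lia.
  by rewrite mulr0 mulr0.
under eq_bigr do rewrite term.
rewrite (bigD1 (last b t)) //= rk0 eqxx.
have h1 := mu_sign b hb hr hg (last b t); rewrite rk0 in h1.
have h2 : (0 <= \sum_(x : T | x != last b t) (if rk b x == (r - i)%N then (-1) ^+ rk b x * mobius b x else 0))%R.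
  apply: sumr_ge0 => x _; case: ifP => // _; apply: ltW; exact: mu_sign.
by apply: (lt_le_trans h1); rewrite lerDl.
Qed.
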